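(* Let $\theta \in \mathbb{R}^d\setminus\{0\}$, $b \in \mathbb{R}$, and let $f(z)=\sigma(\langle \theta, z\rangle + b)$ with $\sigma(u)=1/(1+e^{-u})$, the predicted label being $\hat y(z)=1$ if $\langle\theta,z\rangle+b\ge 0$ and $\hat y(z)=0$ otherwise. Fix a threshold $\epsilon\in(1/2,1)$ and let $g$ be the counterfactual-explanation map defined below. Let $x\in\mathbb{R}^d$ with $\langle\theta,x\rangle+b\neq 0$, let $c=g(x)$ (the CF) and $c'=g(c)$ (the CCF). Put $m=\frac{c+c'}{2}$, $v=c-c'$, and $s=+1$ if $\hat y(c)=1$, $s=-1$ if $\hat y(c)=0$. Define the substitute classifier $h:\mathbb{R}^d\to\{0,1\}$ by $h(z)=1$ if $s\,\langle v, z-m\rangle\ge 0$ and $h(z)=0$ otherwise. Then $v\neq 0$, $m$ lies on the decision boundary $\{z:\langle\theta,z\rangle+b=0\}$, and $h(z)=\hat y(z)$ for every $z\in\mathbb{R}^d$; i.e. a substitute model with $100\%$ agreement with $f$ is obtained from the single pair $(c,c')$ together with their predicted labels, without any training.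
   Context: Counterfactual explanation map: for an input $z$ with predicted label $\ell=\hat y(z)$, $g(z)$ is the point closest to $z$ in Euclidean distance whose predicted probability of the opposite class $1-\ell$ is at least $\epsilon$; that is, with $t=\log\frac{\epsilon}{1-\epsilon}>0$, $g(z)=\arg\min\{\|w-z\|_2 : \langle\theta,w\rangle+b\ge t\}$ if $\ell=0$, and $g(z)=\arg\min\{\|w-z\|_2 : \langle\theta,w\rangle+b\le -t\}$ if $\ell=1$ (equivalently, $g(z)$ is obtained by moving from $z$ along $\pm\theta$, the gradient direction, until the target-class probability reaches $\epsilon$). The CCF of $x$ is the counterfactual explanation of its counterfactual explanation, $g(g(x))$. The attacker has access only to $c$, $c'$ and their predicted labels, not to $\theta$ or $b$. *)

(* Defs.v *)
From HB Require Import structures.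
From mathcomp Require Import all_boot all_order all_algebra.
From mathcomp Require Import all_classical all_reals all_analysis.
Set Implicit Arguments. Unset Strict Implicit. Unset Printing Implicit Defensive.
Import Order.TTheory GRing.Theory Num.Theory.
Local Open Scope ring_scope.

Section Defs.
Variables (R : realType) (d : nat).

Definition dotp (u v : 'rV[R]_d) : R := \sum_(i < d) u ord0 i * v ord0 i.
Definition enorm (u : 'rV[R]_d) : R := Num.sqrt (dotp u u).

Definition score (theta : 'rV[R]_d) (b : R) (z : 'rV[R]_d) : R := dotp theta z + b.

Definition sigmoid (u : R) : R := 1 / (1 + expR (- u)).
Definition fmodel theta b z := sigmoid (score theta b z).

(* predicted label: true = 1, false = 0 *)
Definition yhat theta b (z : 'rV[R]_d) : bool := 0 <= score theta b z.

Definition thr (eps : R) : R := ln (eps / (1 - eps)).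

Definition cf_feasible theta b eps (z w : 'rV[R]_d) : Prop :=
  if yhat theta b z then score theta b w <= - thr eps
  else thr eps <= score theta b w.

(* w = g(z): w is the Euclidean-closest feasible point to z (argmin) *)
Definition is_cf theta b eps (z w : 'rV[R]_d) : Prop :=
  cf_feasible theta b eps z w /\
  forall w', cf_feasible theta b eps z w' -> enorm (w - z) <= enorm (w' - z).

Definition hsub (c c' : 'rV[R]_d) (lc : bool) (z : 'rV[R]_d) : bool :=
  let m := 2^-1 *: (c + c') in
  let v := c - c' in
  let s : R := if lc then 1 else -1 in
  0 <= s * dotp v (z - m).
End Defs.

(* Main.v *)
Require Import Defs.
From HB Require Import structures.
From mathcomp Require Import all_boot all_order all_algebra.
From mathcomp Require Import all_classical all_reals all_analysis.
From mathcomp Require Import ring lra.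
Import Order.TTheory GRing.Theory Num.Theory.
Local Open Scope ring_scope.

Section Helpers.
Variables (R : realType) (d : nat).
Implicit Types (u v w : 'rV[R]_d) (a : R).

Lemma dotpC u v : dotp u v = dotp v u.
Proof. by apply: eq_bigr => i _; rewrite mulrC. Qed.

Lemma dotpDl u v w : dotp (u + v) w = dotp u w + dotp v w.
Proof. by rewrite /dotp -big_split; apply: eq_bigr => i _; rewrite mxE mulrDl. Qed.

Lemma dotpNl u w : dotp (- u) w = - dotp u w.
Proof. by rewrite /dotp -sumrN; apply: eq_bigr => i _; rewrite mxE mulNr. Qed.

Lemma dotpBl u v w : dotp (u - v) w = dotp u w - dotp v w.
Proof. by rewrite dotpDl dotpNl. Qed.

Lemma dotpZl a u w : dotp (a *: u) w = a * dotp u w.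
Proof. by rewrite /dotp mulr_sumr; apply: eq_bigr => i _; rewrite mxE mulrA. Qed.

Lemma dotpDr u v w : dotp w (u + v) = dotp w u + dotp w v.
Proof. by rewrite dotpC dotpDl !(dotpC w). Qed.
Lemma dotpBr u v w : dotp w (u - v) = dotp w u - dotp w v.
Proof. by rewrite dotpC dotpBl !(dotpC w). Qed.
Lemma dotpZr a u w : dotp w (a *: u) = a * dotp w u.
Proof. by rewrite dotpC dotpZl dotpC. Qed.

Lemma dotp_ge0 u : 0 <= dotp u u.
Proof. by apply: sumr_ge0 => i _; rewrite -expr2 sqr_ge0. Qed.

Lemma dotp_eq0 u : dotp u u = 0 -> u = 0.
Proof.
move=> H; apply/rowP => i; rewrite mxE.
have := psumr_eq0P (P := predT) (fun i _ => sqr_ge0 (u ord0 i)).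
rewrite /dotp in H.
move=> /(_ (etrans (eq_bigr _ (fun j _ => esym (expr2 (u ord0 j)))) H) i isT).
by move/eqP; rewrite sqrf_eq0 => /eqP.
Qed.

Lemma dotp_gt0 u : u != 0 -> 0 < dotp u u.
Proof.
move=> Hu; rewrite lt_def dotp_ge0 andbT; apply/eqP => /dotp_eq0 H.
by rewrite H eqxx in Hu.
Qed.

Lemma scoreE (theta z : 'rV[R]_d) b : score theta b z = dotp theta z + b.
Proof. by []. Qed.

Lemma proj_lemma (theta z c : 'rV[R]_d) a :
  dotp (c - z) (c - z) <= a ^+ 2 * dotp theta theta ->
  0 <= a * (dotp theta (c - z) - a * dotp theta theta) ->
  c = z + a *: theta.
Proof.
move=> H1 H2.
have E : dotp (c - z - a *: theta) (c - z - a *: theta) =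
  dotp (c - z) (c - z) - 2 * a * dotp theta (c - z) + a ^+ 2 * dotp theta theta.
  rewrite !dotpBl !dotpBr !dotpZl !dotpZr (dotpC c theta) (dotpC z theta).
  by rewrite expr2; ring.
have : dotp (c - z - a *: theta) (c - z - a *: theta) <= 0.
  rewrite E; nra.
move=> Hle.
have /dotp_eq0 H0 : dotp (c - z - a *: theta) (c - z - a *: theta) = 0.
  by apply/eqP; rewrite eq_le Hle dotp_ge0.
by apply/eqP; rewrite -subr_eq0 opprD addrA H0.
Qed.

Lemma cf_char (theta z c : 'rV[R]_d) b eps : theta != 0 -> 0 < thr eps ->
  is_cf theta b eps z c ->
  exists a, c = z + a *: theta /\
    score theta b c = (if yhat theta b z then - thr eps else thr eps).
Proof.
move=> Ht tpos [Hf Hmin].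
set n := dotp theta theta.
have npos : 0 < n by apply: dotp_gt0.
set t := thr eps in tpos Hf Hmin *.
set tau := (if yhat theta b z then - t else t).
set a := (tau - score theta b z) / n.
set p := z + a *: theta.
have Sp : score theta b p = tau.
  have nn : n != 0 by rewrite gt_eqF.
  rewrite /p !scoreE dotpDr dotpZr /a -/n scoreE; field; exact: nn.
have Hp : cf_feasible theta b eps z p.
  rewrite /cf_feasible Sp /tau; by case: (yhat theta b z); rewrite lexx.
have H1 := Hmin p Hp.
have Hpz : p - z = a *: theta by rewrite /p addrC addKr.
rewrite Hpz /enorm ler_sqrt ?dotp_ge0 // dotpZl dotpZr -/n mulrA -expr2 in H1.
have an : a * n = tau - score theta b z by rewrite /a divfK // gt_eqF.
have Hd : dotp theta (c - z) = score theta b c - score theta b z.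
  by rewrite dotpBr !scoreE; ring.
have key : 0 <= a * (dotp theta (c - z) - a * n).
  rewrite Hd an.
  have -> : score theta b c - score theta b z - (tau - score theta b z)
     = score theta b c - tau by ring.
  rewrite /a mulrAC; apply: mulr_ge0; last by rewrite invr_ge0 ltW.
  move: Hf; rewrite /cf_feasible /tau /yhat; case: ifP => Hy Hf.
    rewrite -/t in Hf; apply: mulr_le0; lra.
  move: Hy => /negbT; rewrite -ltNge => Hy; rewrite -/t in Hf; apply: mulr_ge0; lra.
have Hc : c = p by apply: proj_lemma.
by exists a; split => //; rewrite Hc Sp.
Qed.
End Helpers.

Theorem mainTheorem1 (R : realType) (d : nat) (theta : 'rV[R]_d) (b eps : R)
    (x c c' : 'rV[R]_d) :
  theta != 0 -> 2^-1 < eps -> eps < 1 ->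
  score theta b x != 0 ->
  is_cf theta b eps x c -> is_cf theta b eps c c' ->
  (c - c' != 0) /\ score theta b (2^-1 *: (c + c')) = 0 /\
  (forall z : 'rV[R]_d, hsub c c' (yhat theta b c) z = yhat theta b z).
Proof.
move=> Ht He1 He2 Hx Hc Hc'.
have tpos : 0 < thr eps.
  apply: ln_gt0; rewrite ltr_pdivlMr; lra.
set t := thr eps in tpos.
have npos : 0 < dotp theta theta by apply: dotp_gt0.
set n := dotp theta theta in npos.
have [a1 [_ Sc]] := @cf_char _ _ theta x c b eps Ht tpos Hc.
have [a2 [Ec' Sc']] := @cf_char _ _ theta c c' b eps Ht tpos Hc'.
rewrite -/t in Sc Sc'.
have Sc2 : score theta b c = if yhat theta b c then t else - t.
  rewrite /yhat; move: Sc; case: (yhat theta b x) => ->.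
    by rewrite oppr_ge0 leNgt tpos.
  by rewrite ltW.
have Hdiff : score theta b c' = score theta b c + a2 * n.
  by rewrite Ec' !scoreE dotpDr dotpZr -/n; ring.
have Ev : c - c' = (- a2) *: theta by rewrite Ec' opprD addrA subrr add0r scaleNr.
have Sm : score theta b (2^-1 *: (c + c')) = 0.
  rewrite !scoreE dotpZr dotpDr -(addrK b (dotp theta c)) -(addrK b (dotp theta c')).
  rewrite -!scoreE Sc2 Sc'; by case: (yhat theta b c); field.
have ka : 0 < (if yhat theta b c then 1 else -1) * - a2.
  move: Hdiff; rewrite Sc2 Sc'; case: (yhat theta b c) => H.
    rewrite mul1r; nra.
  rewrite mulN1r opprK; nra.
split.
  rewrite Ev scaleNr oppr_eq0 scaler_eq0 negb_or Ht andbT.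
  apply/eqP => a0; move: ka; rewrite a0 oppr0 mulr0 ltxx //.
split => // z.
rewrite /hsub Ev dotpZl dotpBr.
have -> : dotp theta (2^-1 *: (c + c')) = - b.
  by apply/eqP; rewrite -subr_eq0 opprK -scoreE Sm.
rewrite mulrA pmulr_rge0 // /yhat scoreE; congr (_ <= _); ring.
Qed.
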